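(* Consider a cellular network with $n$ base stations (cells) $\mathcal{N}=\{1,\dots,n\}$, where base station $i$ serves a nonempty set $\mathcal{J}_i$ of users (the sets $\mathcal{J}_i$ are pairwise disjoint), with channel power gains $g_{kj}>0$ from base station $k$ to user $j$ and noise power $\sigma^2>0$. For a power vector $\mathbf{p}>\mathbf{0}$, a load vector $\mathbf{x}\ge\mathbf{0}$ and a rate vector $\mathbf{r}=(r_{ij})_{i\in\mathcal{N},j\in\mathcal{J}_i}>\mathbf{0}$, define $$\mathrm{SINR}_{ij}(\mathbf{x},\mathbf{p})=\frac{p_i g_{ij}}{\sum_{k\in\mathcal{N}\setminus\{i\}} p_k g_{kj} x_k+\sigma^2},\qquad f_i(\mathbf{x};\mathbf{r},\mathbf{p})=\sum_{j\in\mathcal{J}_i}\frac{r_{ij}}{\log\big(1+\mathrm{SINR}_{ij}(\mathbf{x},\mathbf{p})\big)},$$ and $\mathbf{f}=(f_1,\dots,f_n)^T$. Let $\mathbf{d}_{\min}>\mathbf{0}$ be a given minimum-rate vector and consider Problem P0: $$\min_{\mathbf{p}>\mathbf{0},\ \mathbf{r}>\mathbf{0},\ \mathbf{0}<\mathbf{x}\le\mathbf{1}} \mathbf{x}^T\mathbf{p}\quad\text{s.t.}\quad \mathbf{x}=\mathbf{f}(\mathbf{x};\mathbf{r},\mathbf{p}),\quad \mathbf{r}\ge\mathbf{d}_{\min}.$$ Suppose full load is implementable, i.e., there exists $\mathbf{p}>\mathbf{0}$ with $\mathbf{1}=\mathbf{f}(\mathbf{1};\mathbf{d}_{\min},\mathbf{p})$.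 Then the optimal solution $(\mathbf{p}^\star,\mathbf{r}^\star,\mathbf{x}^\star)$ of Problem P0 is as follows: $\mathbf{r}^\star=\mathbf{d}_{\min}$, and $\mathbf{p}^\star$ is such that $\mathbf{x}^\star=\mathbf{1}$; thus $\mathbf{p}^\star$ is given implicitly by $\mathbf{1}=\mathbf{f}(\mathbf{1};\mathbf{d}_{\min},\mathbf{p}^\star)$.
   Context: All vector inequalities are componentwise; $\mathbf{a}>\mathbf{0}$ means every component is strictly positive; $\mathbf{0}$ and $\mathbf{1}$ are the all-zeros and all-ones vectors; $\log$ is the natural logarithm. The quantity $x_i$ is the load of cell $i$ and $p_i$ the transmit power per resource unit of base station $i$; $\mathbf{x}^T\mathbf{p}=\sum_i x_ip_i$ is the sum transmission energy. The equation $\mathbf{x}=\mathbf{f}(\mathbf{x};\mathbf{r},\mathbf{p})$ is called the non-linear load coupling equation (NLCE). *)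

(* Defs.v *)
From HB Require Import structures.
From mathcomp Require Import all_boot all_order all_algebra.
From mathcomp Require Import all_classical all_reals all_analysis.
Set Implicit Arguments. Unset Strict Implicit. Unset Printing Implicit Defensive.
Import Order.TTheory GRing.Theory Num.Theory.
Local Open Scope ring_scope.

(* Network model: cells are 'I_n; users form a finite type U, and
   [s j] is the (unique) base station serving user j, so that
   J_i = [set j | s j == i] (pairwise disjoint by construction).  Vectors indexed by cells
   are functions 'I_n -> R; the rate vector r is indexed by users j
   (r j stands for r_{s j, j}). *)
Section Network.
Variables (R : realType) (n : nat) (U : finType).
Variables (s : U -> 'I_n) (g : 'I_n -> U -> R) (sigma2 : R).

Definition SINR (x p : 'I_n -> R) (i : 'I_n) (j : U) : R :=
  p i * g i j / (\sum_(k < n | k != i) p k * g k j * x k + sigma2).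

Definition f_load (x : 'I_n -> R) (r : U -> R) (p : 'I_n -> R) (i : 'I_n) : R :=
  \sum_(j | s j == i) r j / ln (1 + SINR x p i j).

Definition energy (x p : 'I_n -> R) : R := \sum_(i < n) x i * p i.

Definition P0_feasible (dmin : U -> R) (p : 'I_n -> R) (r : U -> R)
    (x : 'I_n -> R) : Prop :=
  (forall i, 0 < p i) /\ (forall j, 0 < r j) /\ (forall i, 0 < x i <= 1) /\
  (forall i, x i = f_load x r p i) /\ (forall j, dmin j <= r j).

Definition P0_optimal (dmin : U -> R) (p : 'I_n -> R) (r : U -> R)
    (x : 'I_n -> R) : Prop :=
  P0_feasible dmin p r x /\
  forall p' r' x', P0_feasible dmin p' r' x' -> energy x p <= energy x' p'.
End Network.

(* Main.v *)
Require Import Defs.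
From HB Require Import structures.
From mathcomp Require Import all_boot all_order all_algebra.
From mathcomp Require Import all_classical all_reals all_analysis.
From mathcomp Require Import ring lra.
Import Order.TTheory GRing.Theory Num.Theory.
Local Open Scope ring_scope.

Section Aux.
Variable R : realType.

Lemma ln_lt_sub1 (y : R) : 0 < y -> y != 1 -> ln y < y - 1.
Proof.
move=> y0 y1.
have h : ln y != 0 by rewrite ln_eq0.
have := expR_gt1Dx h; rewrite lnK ?posrE //. lra.
Qed.

Lemma concave_strict (x a : R) : 0 < x < 1 -> 0 < a -> a != 1 ->
  x * ln a < ln (x * a + 1 - x).
Proof.
move=> /andP[x0 x1] a0 a1.
set m := x * a + 1 - x.
have m0 : 0 < m by rewrite /m; nra.
have am : a / m != 1.
  apply/negP => /eqP h.
  have : a = m by rewrite -[a](divfK (lt0r_neq0 m0)) h mul1r.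
  rewrite /m => e. have : (1 - x) * (a - 1) = 0 by lra.
  move/eqP; rewrite mulf_eq0 !subr_eq0 (negbTE a1) orbF => /eqP. lra.
have m1 : m^-1 != 1.
  rewrite invr_eq1; apply/negP => /eqP h.
  have : x * (a - 1) = 0 by move: h; rewrite /m; lra.
  move/eqP; rewrite mulf_eq0 !subr_eq0 (negbTE a1) orbF => /eqP. lra.
have h1 := @ln_lt_sub1 (a / m) (divr_gt0 a0 m0) am.
have h2 := @ln_lt_sub1 m^-1 (eqbRL (invr_gt0 m) m0) m1.
rewrite ln_div ?posrE // in h1.
rewrite lnV ?posrE // in h2.
have key : x * (a / m) + (1 - x) * m^-1 = 1.
  rewrite /m; field; rewrite -/m; exact: lt0r_neq0.
move: key h1 h2; set u := a / m; set v := m^-1; set A := ln a; set M := ln m.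
nra.
Qed.

Lemma concave_weak (x a : R) : 0 < x <= 1 -> 0 < a ->
  x * ln a <= ln (x * a + 1 - x).
Proof.
move=> /andP[x0 x1] a0.
have [->|xn1] := eqVneq x 1.
  by rewrite mul1r mul1r addrK.
have [->|an1] := eqVneq a 1.
  by rewrite ln1 mulr0 mulr1 addrAC subrr add0r ln1.
apply: ltW; apply: concave_strict => //.
by rewrite x0 lt_neqAle xn1 x1.
Qed.
End Aux.

Section Main.
Variables (R : realType) (n : nat) (U : finType).
Variables (s : U -> 'I_n) (g : 'I_n -> U -> R) (sigma2 : R) (dmin : U -> R).
Hypothesis Hne : forall i : 'I_n, exists j : U, s j = i.
Hypothesis Hg : forall (k : 'I_n) (j : U), 0 < g k j.
Hypothesis Hsigma : 0 < sigma2.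
Hypothesis Hd : forall j : U, 0 < dmin j.

Lemma SINR_pos (x p : 'I_n -> R) i j : (forall k, 0 <= x k) -> (forall k, 0 < p k) ->
  0 < SINR g sigma2 x p i j.
Proof.
move=> hx hp; rewrite /SINR; apply: divr_gt0; first by rewrite mulr_gt0.
have : 0 <= \sum_(k < n | k != i) p k * g k j * x k.
  by apply: sumr_ge0 => k _; apply: mulr_ge0; [apply: mulr_ge0; apply: ltW|].
move=> h. set S := (\sum_(k < n | k != i) _) in h *. move: S h Hsigma => S h hs. lra.
Qed.

Lemma L1 (p0 : 'I_n -> R) (Hp0 : forall i, 0 < p0 i)
  (Hf0 : forall i, 1 = f_load s g sigma2 (fun _ => 1) dmin p0 i) p r x
  (Hfeas : P0_feasible s g sigma2 dmin p r x) : forall i, p0 i <= x i * p i.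
Proof.
case: Hfeas => Hp [Hr [Hx [Heq Hdr]]].
have xp k : 0 < x k by case/andP: (Hx k).
have x1 k : x k <= 1 by case/andP: (Hx k).
have qp k : 0 < x k * p k by rewrite mulr_gt0.
move=> i; rewrite leNgt; apply/negP => Hlt.
pose F k := p0 k / (x k * p k).
have [m Hm] : exists m, forall k, F k <= F m.
  exists (Order.arg_max i xpredT F).
  by case: (@arg_maxP _ _ _ i xpredT F isT) => m _ H k; apply: H.
set a := F m.
have a1 : 1 < a.
  apply: lt_le_trans (Hm i); rewrite /F ltr_pdivlMr // mul1r //.
have Hpm : p0 m = a * (x m * p m) by rewrite /a /F divfK // lt0r_neq0.
have Hpk k : p0 k <= a * (x k * p k).
  by have := Hm k; rewrite /F -/a ler_pdivrMr.
have [j0 Hj0] := Hne m.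
have : f_load s g sigma2 (fun _ => 1) dmin p0 m <
       (x m)^-1 * f_load s g sigma2 x r p m.
  rewrite /f_load mulr_sumr; apply: ltr_sum.
    by apply/hasP; exists j0; rewrite ?mem_index_enum // Hj0.
  move=> j _.
  set S1 := SINR g sigma2 x p m j.
  set S0 := SINR g sigma2 (fun _ => 1) p0 m j.
  have S1p : 0 < S1 by apply: SINR_pos => // k; exact: ltW.
  have S0p : 0 < S0 by apply: SINR_pos => // k.
  set I1 := \sum_(k < n | k != m) p k * g k j * x k + sigma2.
  set I0 := \sum_(k < n | k != m) p0 k * g k j * 1 + sigma2.
  have I1p : 0 < I1.
    have : 0 <= \sum_(k < n | k != m) p k * g k j * x k.
      by apply: sumr_ge0 => k _; apply: mulr_ge0; [apply: mulr_ge0|]; (try apply: ltW); rewrite ?ltr01.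
    rewrite /I1 => h; move: (\sum_(k < n | k != m) _) h Hsigma => S h hs; lra.
  have I0a : I0 < a * I1.
    have : \sum_(k < n | k != m) p0 k * g k j * 1 <=
           a * \sum_(k < n | k != m) p k * g k j * x k.
      rewrite mulr_sumr; apply: ler_sum => k _.
      rewrite mulr1 (_ : a * (p k * g k j * x k) = a * (x k * p k) * g k j); last by ring.
      by rewrite ler_pM2r.
    rewrite /I0 /I1 => h.
    move: (\sum_(k < n | k != m) p0 k * _ * _) (\sum_(k < n | k != m) p k * _ * _) h Hsigma a1 => S0' S1' h hs ha; nra.
  have I0p : 0 < I0.
    have : 0 <= \sum_(k < n | k != m) p0 k * g k j * 1.
      by apply: sumr_ge0 => k _; apply: mulr_ge0; [apply: mulr_ge0|]; (try apply: ltW); rewrite ?ltr01.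
    rewrite /I0 => h; move: (\sum_(k < n | k != m) _) h Hsigma => S h hs; lra.
  have hS : x m * S1 < S0.
    have e1 : x m * S1 = (p0 m * g m j) / (a * I1).
      rewrite /S1 /SINR -/I1 Hpm; field.
      by rewrite !lt0r_neq0 //; lra.
    rewrite e1 /S0 /SINR -/I0 ltr_pM2l; last by rewrite mulr_gt0.
    rewrite ltf_pV2 ?posrE // mulr_gt0 //; lra.
  have L1p : 0 < ln (1 + S1) by apply: ln_gt0; lra.
  have S1p' : 0 < 1 + S1 by lra.
  have hc := @concave_weak R (x m) (1 + S1) (Hx m) S1p'.
  have hc' : x m * ln (1 + S1) <= ln (1 + x m * S1).
    by move: hc; have -> : x m * (1 + S1) + 1 - x m = 1 + x m * S1 by ring.
  have hl : ln (1 + x m * S1) < ln (1 + S0).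
    rewrite ltr_ln ?posrE; [lra | |]; first by have := mulr_gt0 (xp m) S1p; lra.
    lra.
  have D0 : 0 < x m * ln (1 + S1) by rewrite mulr_gt0.
  have hlt : x m * ln (1 + S1) < ln (1 + S0) := le_lt_trans hc' hl.
  have L0p : 0 < ln (1 + S0) := lt_trans D0 hlt.
  have : dmin j / ln (1 + S0) < dmin j / (x m * ln (1 + S1)).
    by rewrite ltr_pM2l // ltf_pV2 ?posrE.
  move=> h; apply: (lt_le_trans h).
  rewrite invfM mulrCA ler_pM2l ?invr_gt0 // ler_pM2r ?invr_gt0 //.
rewrite -Hf0 -Heq mulVf ?lt0r_neq0 //; lra.
Qed.

Lemma L2 (p0 : 'I_n -> R) (Hp0 : forall i, 0 < p0 i)
  (Hf0 : forall i, 1 = f_load s g sigma2 (fun _ => 1) dmin p0 i) p r x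
  (Hfeas : P0_feasible s g sigma2 dmin p r x)
  (Hq : forall k, x k * p k = p0 k) : forall i, x i = 1.
Proof.
case: Hfeas => Hp [Hr [Hx [Heq Hdr]]].
have xp k : 0 < x k by case/andP: (Hx k).
have x1 k : x k <= 1 by case/andP: (Hx k).
move=> i; apply/eqP; rewrite eq_le x1 /= leNgt; apply/negP => Hlt.
have [j0 Hj0] := Hne i.
have : x i * f_load s g sigma2 (fun _ => 1) dmin p0 i < f_load s g sigma2 x r p i.
  rewrite /f_load mulr_sumr; apply: ltr_sum.
    by apply/hasP; exists j0; rewrite ?mem_index_enum // Hj0.
  move=> j _.
  have eI : \sum_(k < n | k != i) p k * g k j * x k + sigma2 =
            \sum_(k < n | k != i) p0 k * g k j * 1 + sigma2.
    by congr (_ + _); apply: eq_bigr => k _; rewrite mulr1 -Hq; ring.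
  have I0p : 0 < \sum_(k < n | k != i) p0 k * g k j * 1 + sigma2.
    have : 0 <= \sum_(k < n | k != i) p0 k * g k j * 1.
      by apply: sumr_ge0 => k _; apply: mulr_ge0; [apply: mulr_ge0|]; (try apply: ltW); rewrite ?ltr01.
    move=> h; move: (\sum_(k < n | k != i) _) h Hsigma => S h hs; lra.
  have S0p : 0 < SINR g sigma2 (fun _ => 1) p0 i j by apply: SINR_pos => // k.
  have eS1 : SINR g sigma2 x p i j = SINR g sigma2 (fun _ => 1) p0 i j / x i.
    rewrite /SINR eI -(Hq i); field.
    by rewrite !lt0r_neq0.
  rewrite eS1; move: S0p; set S0 := SINR g sigma2 (fun _ => 1) p0 i j => S0p.
  have Sx : 0 < S0 / x i by rewrite divr_gt0.
  have a0 : 0 < 1 + S0 / x i by lra.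
  have an1 : 1 + S0 / x i != 1 by rewrite gt_eqF // ltrDl.
  have xi01 : 0 < x i < 1 by rewrite xp Hlt.
  have hs := @concave_strict R (x i) (1 + S0 / x i) xi01 a0 an1.
  have e2 : x i * (1 + S0 / x i) + 1 - x i = 1 + S0.
    by field; rewrite lt0r_neq0.
  rewrite e2 in hs.
  have Ap : 0 < ln (1 + S0 / x i) by apply: ln_gt0; lra.
  have Bp : 0 < ln (1 + S0) by apply: ln_gt0; lra.
  have h1 : x i / ln (1 + S0) < (ln (1 + S0 / x i))^-1.
    by rewrite ltr_pdivrMr // mulrC ltr_pdivlMr // mulrC.
  apply: (@lt_le_trans _ _ (dmin j / ln (1 + S0 / x i))).
    by rewrite mulrCA ltr_pM2l.
  by rewrite ler_pM2r ?invr_gt0.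
by rewrite -Hf0 mulr1 -Heq ltxx.
Qed.

Lemma L3 (p0 : 'I_n -> R) (Hp0 : forall i, 0 < p0 i)
  (Hf0 : forall i, 1 = f_load s g sigma2 (fun _ => 1) dmin p0 i) r
  (Hfeas : P0_feasible s g sigma2 dmin p0 r (fun _ => 1)) : r = dmin.
Proof.
case: Hfeas => Hp [Hr [Hx [Heq Hdr]]].
apply: funext => j.
have e : f_load s g sigma2 (fun _ => 1) r p0 (s j) -
         f_load s g sigma2 (fun _ => 1) dmin p0 (s j) = 0.
  by rewrite -Heq -Hf0 subrr.
rewrite /f_load -sumrB in e.
have Lp : forall j', 0 < ln (1 + SINR g sigma2 (fun _ => 1) p0 (s j) j').
  move=> j'; apply: ln_gt0.
  have : 0 < SINR g sigma2 (fun _ => 1) p0 (s j) j' by apply: SINR_pos => // k.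
  by move=> Sp; rewrite ltrDl.
have Hnn : forall j', s j' == s j -> 0 <= r j' / ln (1 + SINR g sigma2 (fun _ => 1) p0 (s j) j') -
      dmin j' / ln (1 + SINR g sigma2 (fun _ => 1) p0 (s j) j').
  by move=> j' _; rewrite subr_ge0 ler_pM2r ?invr_gt0.
have := psumr_eq0P Hnn e (eqxx (s j)).
rewrite -mulrBl => /eqP; rewrite mulf_eq0 invr_eq0 (gt_eqF (Lp j)) orbF subr_eq0.
by move/eqP.
Qed.
End Main.

Theorem theorem1 (R : realType) (n : nat) (U : finType)
  (s : U -> 'I_n) (g : 'I_n -> U -> R) (sigma2 : R) (dmin : U -> R)
  (Hne : forall i : 'I_n, exists j : U, s j = i)
  (Hg : forall (k : 'I_n) (j : U), 0 < g k j)
  (Hsigma : 0 < sigma2)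
  (Hd : forall j : U, 0 < dmin j)
  (Hfull : exists p : 'I_n -> R, (forall i, 0 < p i) /\
             forall i, 1 = f_load s g sigma2 (fun _ => 1) dmin p i) :
  forall (p : 'I_n -> R) (r : U -> R) (x : 'I_n -> R),
    P0_optimal s g sigma2 dmin p r x <->
    [/\ r = dmin, x = (fun _ => 1), (forall i, 0 < p i) &
        forall i, 1 = f_load s g sigma2 (fun _ => 1) dmin p i].
Proof.
have feas0 : forall p0 : 'I_n -> R, (forall i, 0 < p0 i) ->
    (forall i, 1 = f_load s g sigma2 (fun _ => 1) dmin p0 i) ->
    P0_feasible s g sigma2 dmin p0 dmin (fun _ => 1).
  move=> p0 Hp0 Hf0; split=> //; split=> //; split; first by move=> i; rewrite ltr01 lexx.
  by split.
move=> p r x; split.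
- case=> Hfeas Hopt.
  have [p0 [Hp0 Hf0]] := Hfull.
  have E := Hopt _ _ _ (feas0 _ Hp0 Hf0).
  have Lq := @L1 R n U s g sigma2 dmin Hne Hg Hsigma Hd p0 Hp0 Hf0 p r x Hfeas.
  have Hq : forall k, x k * p k = p0 k.
    have e : \sum_(k < n) (x k * p k - p0 k) = 0.
      apply/eqP; rewrite eq_le; apply/andP; split.
        rewrite sumrB subr_le0; move: E; rewrite /energy.
        by under [X in _ <= X -> _]eq_bigr do rewrite mul1r.
      by apply: sumr_ge0 => k _; rewrite subr_ge0.
    move=> k; apply/eqP; rewrite -subr_eq0; apply/eqP.
    by apply: (psumr_eq0P _ e) => // k' _; rewrite subr_ge0.
  have Hx1 := @L2 R n U s g sigma2 dmin Hne Hg Hsigma Hd p0 Hp0 Hf0 p r x Hfeas Hq.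
  have ex : x = (fun _ => 1) := funext Hx1.
  have ep : p = p0.
    by apply: funext => k; rewrite -Hq Hx1 mul1r.
  subst x p.
  have er := @L3 R n U s g sigma2 dmin Hg Hsigma p0 Hp0 Hf0 r Hfeas.
  by subst r.
- case=> -> -> Hp Hf; split; first exact: feas0.
  move=> p' r' x' F'; rewrite /energy; apply: ler_sum => i _; rewrite mul1r.
  exact: (@L1 R n U s g sigma2 dmin Hne Hg Hsigma Hd p Hp Hf p' r' x' F').
Qed.
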